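(* Let $(a_n(q))$ be a $q$-Euler–Gauss sequence with $a_n(1)\neq0$ for all $n\ge1$. Then $(a_n(q))$ is a $q$-Gauss sequence.
   Context: $\mu$ is the Möbius function, $[n]_q=1+q+\dots+q^{n-1}$; polynomial congruences modulo $[n]_q$ mean divisibility of the difference by $[n]_q$ in $\mathbb{Z}[q]$. A sequence $(a_n(q))$ in $\mathbb{Z}[q]$ is a $q$-Euler–Gauss sequence if for all $n\ge1$, $\prod_{d\mid n,\,\mu(d)=1}a_{n/d}(q^d)\equiv\prod_{d\mid n,\,\mu(d)=-1}a_{n/d}(q^d)\pmod{[n]_q}$; it is a $q$-Gauss sequence if $\sum_{d\mid n}\mu(d)a_{n/d}(q^d)\equiv0\pmod{[n]_q}$ for all $n\ge1$. *)

(* Defs.v *)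
From mathcomp Require Import all_boot all_order all_algebra.
Set Implicit Arguments. Unset Strict Implicit. Unset Printing Implicit Defensive.
Import GRing.Theory.
Local Open Scope ring_scope.

(* Moebius function: mu(n) = (-1)^k if n>0 is a product of k distinct primes,
   0 if n is not squarefree (and 0 at n = 0, never used). *)
Definition mobius (n : nat) : int :=
  if (n == 0)%N then 0
  else if all (fun p => logn p n == 1)%N (primes n) then (-1) ^+ size (primes n)
  else 0.

Definition qint (n : nat) : {poly int} := \sum_(i < n) 'X^i.

Definition qcong (n : nat) (A B : {poly int}) : Prop :=
  exists r : {poly int}, A - B = r * qint n.

Definition qterm (a : nat -> {poly int}) (n d : nat) : {poly int} :=
  a (n %/ d)%N \Po 'X^d.

Definition q_Euler_Gauss (a : nat -> {poly int}) : Prop :=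
  forall n : nat, (0 < n)%N ->
    qcong n (\prod_(d <- divisors n | mobius d == 1) qterm a n d)
            (\prod_(d <- divisors n | mobius d == -1) qterm a n d).

Definition q_Gauss (a : nat -> {poly int}) : Prop :=
  forall n : nat, (0 < n)%N ->
    qcong n (\sum_(d <- divisors n) (mobius d)%:P * qterm a n d) 0.

(* Main.v *)
Require Import Defs.
From mathcomp Require Import all_boot all_order all_algebra all_field.
From mathcomp Require Import zify.
Set Implicit Arguments. Unset Strict Implicit.
Import GRing.Theory Num.Theory.
Local Open Scope ring_scope.


Lemma mobius1 : mobius 1%N = 1.
Proof. by []. Qed.

Lemma mobiusMp (d p : nat) : prime p -> ~~ (p %| d)%N -> (0 < d)%N ->
  mobius (d * p) = - mobius d.
Proof.
move=> pp npd d0; have p0 := prime_gt0 pp.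
have dp0 : (d * p != 0)%N by rewrite muln_eq0 negb_or -!lt0n d0 p0.
have hperm : perm_eq (primes (d * p)) (p :: primes d).
  apply: uniq_perm; first exact: primes_uniq.
    by rewrite /= primes_uniq andbT mem_primes (negbTE npd) !andbF.
  move=> q; rewrite primesM // in_cons orbC primes_prime // mem_seq1 //.
have lp : logn p d = 0%N by apply/eqP; rewrite -leqn0 leqNgt logn_gt0 mem_primes (negbTE npd) !andbF.
have hall : all (fun q => logn q (d * p) == 1)%N (primes (d * p)) =
            all (fun q => logn q d == 1)%N (primes d).
  rewrite (perm_all _ hperm) /= lognM // lp (logn_prime _ pp) eqxx /=.
  apply: eq_in_all => q; rewrite mem_primes => /and3P [_ _ qd].
  rewrite lognM // (logn_prime _ pp); case: (eqVneq q p) => [qp | qp].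
    by rewrite qp (negbTE npd) in qd.
  by rewrite addn0.
rewrite /mobius (negbTE dp0) (gtn_eqF d0) hall.
case: ifP => _; last by rewrite oppr0.
by rewrite (perm_size hperm) /= exprS mulN1r.
Qed.

Lemma mobius_sqf (d p : nat) : prime p -> (p %| d)%N -> mobius d != 0 ->
   ~~ (p %| d %/ p)%N.
Proof.
move=> pp pd; rewrite /mobius; case: (posnP d) => [-> //| d0].
rewrite /=; case: ifP => [/allP hall _ | _]; last by rewrite eqxx.
have /hall/eqP hl : (p \in primes d) by rewrite mem_primes pp d0.
apply/negP => hpp.
have : (p ^ 2 %| d)%N by rewrite expnS expn1 -(divnK pd) mulnC dvdn_pmul2l ?prime_gt0.
by rewrite pfactor_dvdn // hl.
Qed.


Definition ev (f : {poly int}) (z : algC) : algC := (map_poly intr f).[z].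

Lemma ev_prod (I : Type) (r : seq I) (P : pred I) (F : I -> {poly int}) z :
  ev (\prod_(i <- r | P i) F i) z = \prod_(i <- r | P i) ev (F i) z.
Proof. by rewrite /ev rmorph_prod horner_prod. Qed.

Lemma ev_sum (I : Type) (r : seq I) (P : pred I) (F : I -> {poly int}) z :
  ev (\sum_(i <- r | P i) F i) z = \sum_(i <- r | P i) ev (F i) z.
Proof. by rewrite /ev rmorph_sum horner_sum. Qed.

Lemma ev_mul f g z : ev (f * g) z = ev f z * ev g z.
Proof. by rewrite /ev rmorphM hornerM. Qed.

Lemma ev_sub f g z : ev (f - g) z = ev f z - ev g z.
Proof. by rewrite /ev rmorphB hornerD hornerN. Qed.

Lemma ev_C c z : ev c%:P z = c%:~R.
Proof. by rewrite /ev map_polyC hornerC. Qed.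

Lemma ev_qterm a n d z : ev (qterm a n d) z = ev (a (n %/ d)%N) (z ^+ d).
Proof. by rewrite /ev /qterm map_comp_poly horner_comp map_polyXn hornerXn. Qed.

Lemma ev1 f : ev f 1 = (f.[1])%:~R.
Proof. by rewrite /ev -(rmorph1 (intr : int -> algC)) horner_map. Qed.

Lemma qintX (R : comNzRingType) (n : nat) :
  (\sum_(i < n) 'X^i : {poly R}) * ('X - 1) = 'X^n - 1.
Proof.
elim: n => [|n IH]; first by rewrite big_ord0 mul0r expr0 subrr.
rewrite big_ord_recr /= mulrDl IH mulrBr mulr1 -exprSr.
by rewrite addrC addrA subrK.
Qed.

Lemma ev_qint N z : z ^+ N = 1 -> z != 1 -> ev (qint N) z = 0.
Proof.
move=> zN z1.
have h := congr1 (fun f : {poly int} => ev f z) (qintX int N).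
move: h; rewrite /= ev_mul ev_sub ev_sub ev_C /ev map_polyX map_polyXn hornerX hornerXn zN.
rewrite -/(ev _ z) subrr => /eqP; rewrite mulf_eq0 subr_eq0 (negbTE z1) orbF => /eqP.
by rewrite /qint.
Qed.



Lemma div_helper (K M' p : nat) : (0 < p)%N -> (p %| M')%N -> (M' %| K)%N -> (0 < M')%N ->
  (M' %/ p %| K %/ p)%N /\ (K %/ M' = (K %/ p) %/ (M' %/ p))%N.
Proof.
move=> p0 /dvdnP [r ->] /dvdnP [k ->] M0.
have r0 : (0 < r)%N by move: M0; rewrite muln_gt0 => /andP [].
have e1 : (k * (r * p) %/ p = k * r)%N by rewrite mulnA mulnK.
have e2 : (r * p %/ p = r)%N by rewrite mulnK.
rewrite e1 e2 mulnK //; split; first exact: dvdn_mull.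
by rewrite mulnK.
Qed.

Lemma prim_div (p M0 : nat) (z : algC) : (0 < p)%N -> M0.-primitive_root z -> (p %| M0)%N ->
  (M0 %/ p).-primitive_root (z ^+ p).
Proof.
move=> p0 hz pM; have := exp_prim_root hz p.
by rewrite (gcdn_idPl pM).
Qed.

Section Core.
Variable a : nat -> {poly int}.
Variables (N M : nat) (w : algC) (p : nat).
Hypotheses (N0 : (0 < N)%N) (hw : M.-primitive_root w) (MN : (M %| N)%N)
  (pp : prime p) (pM : (p %| M)%N).
Hypothesis IH : forall N', (N' < N)%N -> (0 < N')%N -> forall M' w',
  M'.-primitive_root w' -> (M' %| N')%N -> ev (a N') w' = ev (a (N' %/ M')) 1.

Let T d := ev (a (N %/ d)) (w ^+ d).
Let p0 := prime_gt0 pp.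
Let M0 := prim_order_gt0 hw.

Lemma wN : w ^+ N = 1.
Proof. by apply/eqP; rewrite -(prim_order_dvd hw). Qed.

Lemma order_of d : (d %| N)%N -> {M' | M'.-primitive_root (w ^+ d) & (M' %| N %/ d)%N}.
Proof.
move=> dN; have d0 : (0 < d)%N by apply: dvdn_gt0 dN.
apply: prim_order_exists; first by rewrite divn_gt0 // dvdn_leq.
by rewrite -exprM mulnC divnK // wN.
Qed.

Lemma order_p d M' : ~~ (p %| d)%N -> M'.-primitive_root (w ^+ d) -> (p %| M')%N.
Proof.
move=> npd hM'.
have : (M %| d * M')%N by rewrite (prim_order_dvd hw) exprM (prim_expr_order hM').
move=> /(dvdn_trans pM); rewrite Euclid_dvdM // (negbTE npd) //.
Qed.

Lemma Tnz_val d : (d %| N)%N -> (1 < d)%N -> exists2 j, (0 < j)%N & T d = ev (a j) 1.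
Proof.
move=> dN d1; have d0 : (0 < d)%N by apply: dvdn_gt0 dN.
case: (order_of dN) => M' hM' M'd.
have Nd0 : (0 < N %/ d)%N by rewrite divn_gt0 // dvdn_leq.
exists (N %/ d %/ M')%N; first by rewrite divn_gt0 ?(prim_order_gt0 hM') // dvdn_leq.
by rewrite /T (IH _ _ hM' M'd) //; apply: ltn_Pdiv.
Qed.

Lemma Tp : T p = ev (a (N %/ M)) 1.
Proof.
have p1 := prime_gt1 pp.
have pN : (p %| N)%N := dvdn_trans pM MN.
have [h1 h2] := div_helper p0 pM MN M0.
rewrite /T (IH _ _ (prim_div p0 hw pM) h1).
- by rewrite h2.
- by rewrite ltn_Pdiv.
- by rewrite divn_gt0 // dvdn_leq.
Qed.

Lemma Tsig1 e : (e %| N)%N -> ~~ (p %| e)%N -> (1 < e)%N -> T (e * p) = T e.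
Proof.
move=> eN npe e1; have e0 : (0 < e)%N by apply: dvdn_gt0 eN.
case: (order_of eN) => M' hM' M'd.
have pM' := order_p npe hM'.
have M'0 := prim_order_gt0 hM'.
have Ne0 : (0 < N %/ e)%N by rewrite divn_gt0 // dvdn_leq.
have Nelt : (N %/ e < N)%N by apply: ltn_Pdiv.
have [h1 h2] := div_helper p0 pM' M'd M'0.
rewrite /T (IH Nelt Ne0 hM' M'd) exprM divnMA.
rewrite (IH _ _ (prim_div p0 hM' pM')) //.
- by rewrite h2.
- by apply: leq_ltn_trans Nelt; apply: leq_div.
- by rewrite divn_gt0 // dvdn_leq // (dvdn_trans pM').
Qed.


Let Pl := [seq d <- divisors N | mobius d != 0].
Let sig d := if (p %| d)%N then (d %/ p)%N else (d * p)%N.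

Lemma pN : (p %| N)%N.
Proof. exact: dvdn_trans pM MN. Qed.

Lemma sig_in d : d \in Pl ->
  [/\ sig d \in Pl, sig (sig d) = d & mobius (sig d) = - mobius d].
Proof.
rewrite mem_filter -dvdn_divisors // => /andP [mu dN].
have d0 : (0 < d)%N by apply: dvdn_gt0 dN.
rewrite /sig; case: (boolP (p %| d)%N) => pd.
- have npe := mobius_sqf pp pd mu.
  have de : d = (d %/ p * p)%N by rewrite divnK.
  have e0 : (0 < d %/ p)%N by rewrite divn_gt0 // dvdn_leq.
  have me : mobius (d %/ p) = - mobius d by rewrite {2}de mobiusMp // opprK.
  rewrite (negbTE npe) -de me; split => //.
  rewrite mem_filter me oppr_eq0 mu /= -dvdn_divisors //.
  apply: dvdn_trans dN; rewrite {2}de; exact: dvdn_mulr.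
- rewrite mulnK // dvdn_mull // mobiusMp //; split => //.
  rewrite mem_filter mobiusMp // oppr_eq0 mu /= -dvdn_divisors // Gauss_dvd ?dN ?pN //.
  by rewrite coprime_sym prime_coprime.
Qed.

Lemma perm_sig : perm_eq Pl (map sig Pl).
Proof.
have uP : uniq Pl by rewrite filter_uniq // divisors_uniq.
apply: uniq_perm => //.
  rewrite map_inj_in_uniq // => x y xP yP hxy.
  by have [_ <- _] := sig_in xP; have [_ <- _] := sig_in yP; rewrite hxy.
move=> x; apply/idP/idP.
  move=> xP; have [sP ssx _] := sig_in xP.
  by rewrite -ssx; apply: map_f.
by case/mapP => y yP ->; have [] := sig_in yP.
Qed.

Lemma one_in : 1%N \in Pl.
Proof. by rewrite mem_filter divisor1 mobius1. Qed.

Lemma sig1 : sig 1%N = p.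
Proof. rewrite /sig dvdn1 (gtn_eqF (prime_gt1 pp)); exact: mul1n. Qed.

Lemma Tsig d : d \in Pl -> d != 1%N -> d != p -> T (sig d) = T d.
Proof.
move=> dP d1 dp; have dN : (d %| N)%N by move: dP; rewrite mem_filter -dvdn_divisors // => /andP [].
have d0 : (0 < d)%N by apply: dvdn_gt0 dN.
rewrite /sig; case: (boolP (p %| d)%N) => pd.
- have mu : mobius d != 0 by move: dP; rewrite mem_filter => /andP [].
  have npe := mobius_sqf pp pd mu.
  have de : d = (d %/ p * p)%N by rewrite divnK.
  have e0 : (0 < d %/ p)%N by rewrite divn_gt0 // dvdn_leq.
  have e1 : (1 < d %/ p)%N.
    rewrite ltn_neqAle e0 andbT; apply/negP => /eqP e1.
    by move: dp; rewrite de -e1 mul1n eqxx.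
  have eN : (d %/ p %| N)%N by apply: dvdn_trans dN; rewrite {2}de; exact: dvdn_mulr.
  by rewrite {2}de Tsig1.
- have d1' : (1 < d)%N by rewrite ltn_neqAle eq_sym d1 d0.
  by rewrite Tsig1.
Qed.

Lemma sum_sig (F : nat -> algC) : \sum_(d <- Pl) F d = \sum_(d <- Pl) F (sig d).
Proof. by rewrite (perm_big _ perm_sig) big_map. Qed.

Lemma prod_sig (F : nat -> algC) :
  \prod_(d <- Pl | mobius d == -1) F d = \prod_(d <- Pl | mobius d == 1) F (sig d).
Proof.
rewrite (perm_big _ perm_sig) big_map big_seq_cond [RHS]big_seq_cond.
apply: eq_bigl => d; case: (boolP (d \in Pl)) => //= dP.
by have [_ _ ->] := sig_in dP; rewrite eqr_opp.
Qed.

Lemma to_Pl (c : int) (F : nat -> algC) : c != 0 ->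
  \prod_(d <- divisors N | mobius d == c) F d = \prod_(d <- Pl | mobius d == c) F d.
Proof.
move=> c0; rewrite big_filter_cond; apply: eq_bigl => d.
by case: eqP => [-> | _]; rewrite ?andbF ?c0.
Qed.

Lemma w_neq1 : (1 < M)%N -> w != 1.
Proof.
move=> M1; apply/negP => /eqP w1.
have := prim_order_dvd hw 1; rewrite w1 expr1 eqxx dvdn1 => /eqP M1'.
by rewrite M1' in M1.
Qed.

Lemma EG_conclude : q_Euler_Gauss a -> (forall n, (0 < n)%N -> (a n).[1] != 0) ->
  (1 < M)%N -> ev (a N) w = ev (a (N %/ M)) 1.
Proof.
move=> hEG hnz M1.
have [r hr] := hEG N N0.
have := congr1 (fun f => ev f w) hr.
rewrite /= ev_sub ev_mul ev_qint ?wN ?w_neq1 // mulr0 => /eqP; rewrite subr_eq0 => /eqP.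
rewrite !ev_prod to_Pl // to_Pl ?oppr_eq0 //.
rewrite -/(T _).
have -> : \prod_(d <- Pl | mobius d == -1) ev (qterm a N d) w =
          \prod_(d <- Pl | mobius d == -1) T d by apply: eq_bigr => d _; rewrite ev_qterm.
have -> : \prod_(d <- Pl | mobius d == 1) ev (qterm a N d) w =
          \prod_(d <- Pl | mobius d == 1) T d by apply: eq_bigr => d _; rewrite ev_qterm.
rewrite prod_sig !(big_mkcond (fun d => mobius d == 1)) /=.
have uP : uniq Pl by rewrite filter_uniq // divisors_uniq.
rewrite !(bigD1_seq 1%N) ?one_in // mobius1 eqxx sig1 Tp.
set R := \prod_(d <- Pl | d != 1%N) _.
have -> : \prod_(d <- Pl | d != 1%N) (if mobius d == 1 then T (sig d) else 1) = R.
  rewrite /R big_seq_cond [RHS]big_seq_cond; apply: eq_bigr => d /andP [dP d1].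
  case: ifP => // /eqP md; rewrite Tsig //; apply/negP => /eqP dp.
  by move: md; rewrite dp -(mul1n p) mobiusMp // ?mobius1 ?dvdn1 ?(gtn_eqF (prime_gt1 pp)).
have R0 : R != 0.
  rewrite /R prodf_seq_neq0; apply/allP => d dP; apply/implyP => d1.
  case: ifP => _; last exact: oner_neq0.
  have dN : (d %| N)%N by move: dP; rewrite mem_filter -dvdn_divisors // => /andP [].
  have d0 : (0 < d)%N by apply: dvdn_gt0 dN.
  have d1' : (1 < d)%N by rewrite ltn_neqAle eq_sym d1 d0.
  have [j j0 ->] := Tnz_val dN d1'.
  by rewrite ev1 intr_eq0 hnz.
move/(mulIf R0); rewrite /T divn1 expr1 => ->.
by [].
Qed.

Lemma Gauss_conclude : ev (a N) w = ev (a (N %/ M)) 1 ->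
  \sum_(d <- divisors N) (mobius d)%:~R * T d = 0.
Proof.
move=> hN.
have T1p : T 1%N = T p by rewrite Tp /T divn1 expr1.
have Ts : forall d, d \in Pl -> T (sig d) = T d.
  move=> d dP; case: (eqVneq d 1%N) => [-> | d1]; first by rewrite sig1.
  case: (eqVneq d p) => [-> | dp]; last exact: Tsig.
  by rewrite /sig dvdnn divnn p0.
rewrite -(@big_rmcond _ _ _ _ _ (fun d => mobius d != 0)) /=; last first.
  by move=> d; rewrite negbK => /eqP ->; rewrite mul0r.
rewrite -big_filter -/Pl.
set S := \sum_(d <- Pl) _.
have hS : S = - S.
  rewrite {1}/S sum_sig -sumrN big_seq [RHS]big_seq; apply: eq_bigr => d dP.
  have [_ _ ->] := sig_in dP; by rewrite Ts // rmorphN mulNr.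
apply/eqP; move/eqP: hS; rewrite -addr_eq0 -mulr2n mulrn_eq0 //.
Qed.

End Core.

Lemma Pall (a : nat -> {poly int}) : q_Euler_Gauss a ->
  (forall n, (0 < n)%N -> (a n).[1] != 0) ->
  forall N, (0 < N)%N -> forall M w, M.-primitive_root w -> (M %| N)%N ->
  ev (a N) w = ev (a (N %/ M)%N) 1.
Proof.
move=> hEG hnz; elim/ltn_ind => N IHN N0 M w hw MN.
have M0 := prim_order_gt0 hw.
case: (ltngtP M 1) => [|M1|M1].
- by rewrite ltnNge M0.
- have pp := pdiv_prime M1.
  have IH' : forall N', (N' < N)%N -> (0 < N')%N -> forall M' w',
     M'.-primitive_root w' -> (M' %| N')%N -> ev (a N') w' = ev (a (N' %/ M')%N) 1.
    by move=> N' lt N'0 M' w' hw' d; exact: IHN.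
  exact: (EG_conclude N0 hw MN pp (pdiv_dvd M) IH' hEG hnz).
- have := prim_expr_order hw; rewrite M1 expr1 => ->.
  by rewrite divn1.
Qed.

Lemma qint_monic n : (0 < n)%N -> qint n \is monic.
Proof.
move=> n0; have := monic_Xn_sub_1 int n0.
by rewrite -(qintX int n) monicMr ?monicXsubC.
Qed.

Theorem theorem6 (a : nat -> {poly int}) :
  q_Euler_Gauss a ->
  (forall n : nat, (0 < n)%N -> (a n).[1] != 0) ->
  q_Gauss a.
Proof.
move=> hEG hnz n n0.
set F := \sum_(d <- divisors n) (mobius d)%:P * qterm a n d.
set Q := qint n.
have Qm : Q \is monic by exact: qint_monic.
have Q0 : Q != 0 by exact: monic_neq0.
exists (F %/ Q); rewrite subr0.
have hdiv := Pdiv.IdomainMonic.divp_eq Qm F.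
suff R0 : F %% Q = 0 by rewrite {1}hdiv R0 addr0.
have van : forall z : algC, z ^+ n = 1 -> z != 1 -> (map_poly intr F).[z] = 0.
  move=> z zn z1.
  have [M hz Mn] := prim_order_exists n0 zn.
  have M0 := prim_order_gt0 hz.
  have M1 : (1 < M)%N.
    rewrite ltn_neqAle eq_sym M0 andbT; apply/eqP => M1.
    by move: z1; rewrite -(prim_expr_order hz) M1 expr1 eqxx.
  have := Gauss_conclude n0 hz Mn (pdiv_prime M1) (pdiv_dvd M)
     (fun N' _ N'0 M' w' hw' d => Pall hEG hnz N'0 hw' d) (Pall hEG hnz n0 hz Mn).
  rewrite -/(ev F z) /F ev_sum => h; rewrite -[X in _ = X]h; apply: eq_bigr => d _.
  by rewrite ev_mul ev_C ev_qterm.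
set Fc := map_poly (intr : int -> algC) F.
set Qc := map_poly (intr : int -> algC) Q.
have QcX : Qc * ('X - 1) = 'X^n - 1.
  by rewrite /Qc /Q /qint rmorph_sum /= (eq_bigr (fun i : 'I_n => 'X^i)) ?qintX // => i _; rewrite map_polyXn.
have [z0 hz0] := C_prim_root_exists n0.
have dv : ('X^n - 1) %| ('X - 1) * Fc.
  rewrite -(factor_Xn_sub_1 hz0) -(big_map (fun i => z0 ^+ i) xpredT (fun z => 'X - z%:P)).
  apply: uniq_roots_dvdp.
    apply/allP => z /mapP [i _ ->]; rewrite /root hornerM hornerXsubC.
    case: (eqVneq (z0 ^+ i) 1) => [-> | z1]; first by rewrite subrr mul0r.
    rewrite van ?mulr0 //.
    by rewrite -exprM mulnC exprM (prim_expr_order hz0) expr1n.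
  rewrite uniq_rootsE map_inj_in_uniq ?iota_uniq // => i j.
  rewrite !mem_index_iota => /andP [_ hi] /andP [_ hj] /eqP.
  by rewrite (eq_prim_root_expr hz0) !modn_small // => /eqP.
have dQ : Qc %| Fc.
  by rewrite -(@dvdp_mul2r _ ('X - 1)) ?polyXsubC_eq0 // QcX mulrC.
set R := F %% Q.
have hR : Qc %| map_poly intr R.
  have e : map_poly (intr : int -> algC) R = Fc - map_poly intr (F %/ Q) * Qc.
    rewrite /Fc {1}hdiv rmorphD rmorphM /=; by rewrite addrC addKr.
  by rewrite e dvdp_sub // dvdp_mull.
apply: (@map_inj_poly _ _ (intr : int -> algC)); [exact: intr_inj | by [] |].
rewrite rmorph0; apply/eqP; apply: contraT => Rn0.
have := dvdp_leq Rn0 hR.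
rewrite !size_map_inj_poly //; try exact: intr_inj.
by rewrite leqNgt ltn_modpN0.
Qed.
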